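(* Let $p$ be an odd prime, $x\in\mathbb Z_p$ and $x\not\equiv0\pmod p$. Then $$\sum_{k=0}^{\frac{p-1}2}\binom{2k}k^2\Big(\frac x4\Big)^{2k}\equiv\Big(\frac{-x}p\Big)P_{\frac{p-1}2}\Big(\frac{x+x^{-1}}2\Big)\pmod p.$$
   Context: $\mathbb Z_p$ denotes the set of rational numbers whose denominator (in lowest terms) is prime to $p$; congruences are in this ring. For $a\in\mathbb Z_p$, $\big(\frac ap\big)$ is the Legendre symbol of the residue of $a$ modulo $p$. $P_n(x)$ is the $n$-th Legendre polynomial, defined by $\frac1{\sqrt{1-2xt+t^2}}=\sum_{n\ge0}P_n(x)t^n$, equivalently $P_n(x)=\frac1{2^n}\sum_{k=0}^{[n/2]}\frac{(-1)^k(2n-2k)!}{k!(n-k)!(n-2k)!}x^{n-2k}$. *)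

(* Defs.v *)
From HB Require Import structures.
From mathcomp Require Import all_boot all_order all_algebra.
Set Implicit Arguments. Unset Strict Implicit. Unset Printing Implicit Defensive.
Import Order.TTheory GRing.Theory Num.Theory.
Local Open Scope ring_scope.

(* Z_p : rationals whose denominator (in lowest terms) is prime to p. *)
Definition in_Zp (p : nat) (q : rat) : bool := coprime `|denq q|%N p.

Definition congr_p (p : nat) (a b : rat) : bool := in_Zp p ((a - b) / p%:R).

Definition legendre_rat (p : nat) (a : rat) : int :=
  if congr_p p a 0 then 0
  else if [exists y : 'I_p, congr_p p ((nat_of_ord y)%:R ^+ 2) a] then 1
  else -1.

Definition legendreP (n : nat) : {poly rat} :=
  (2%:R ^+ n)^-1 *:
  \sum_(k < n./2.+1)
     (((-1) ^+ k * ((2 * n - 2 * k)`!)%:R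
        / ((k`!)%:R * ((n - k)`!)%:R * ((n - 2 * k)`!)%:R)) *: 'X^(n - 2 * k)).

(* Main.v *)
Require Import Defs.
From HB Require Import structures.
From mathcomp Require Import all_boot all_order all_algebra all_field.
From mathcomp Require Import ring lra zify.
Import Order.TTheory GRing.Theory Num.Theory.
Local Open Scope ring_scope.
Set Implicit Arguments. Unset Strict Implicit. Unset Printing Implicit Defensive.

Section Red.
Variable p : nat.
Hypothesis pp : prime p.
Local Notation F := 'F_p.

Lemma Fp_nat0 m : ((m%:R : F) == 0) = (p %| m)%N.
Proof. by rewrite -val_eqE /= val_Fp_nat. Qed.

Lemma Fp_int0 (z : int) : ((z%:~R : F) == 0) = (p %| `|z|)%N.
Proof.
case: z => n; first by rewrite -Fp_nat0.
by rewrite NegzE mulrNz oppr_eq0 -Fp_nat0.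
Qed.

Definition red (q : rat) : F := (numq q)%:~R / (denq q)%:~R.

Lemma in_ZpE q : in_Zp p q = ((denq q)%:~R != 0 :> F).
Proof. by rewrite /in_Zp coprime_sym prime_coprime // Fp_int0. Qed.

Definition good (a : rat) (u : F) := in_Zp p a /\ red a = u.

Lemma goodE q (m d : int) : (d%:~R : F) != 0 -> q = m%:~R / d%:~R ->
  good q (m%:~R / d%:~R).
Proof.
move=> dF qE.
have d0 : d != 0 by apply: contraNneq dF => ->.
have dQ : (d%:~R : rat) != 0 by rewrite intr_eq0.
have eqZ : numq q * d = m * denq q.
  apply: (@intr_inj rat); rewrite !intrM numqE qE.
  by rewrite mulrAC divfK.
have dvd : (`|denq q| %| `|d|)%N.
  have : (`|denq q| %| `|numq q| * `|d|)%N by rewrite -abszM eqZ abszM dvdn_mull.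
  by rewrite Gauss_dvdr // coprime_sym coprime_num_den.
have qZ : in_Zp p q.
  rewrite in_ZpE Fp_int0; apply: contra dF => pd.
  by rewrite Fp_int0 (dvdn_trans pd dvd).
split=> //; move: (qZ); rewrite in_ZpE => dqF.
rewrite /red; apply/eqP; rewrite eqr_div // -!intrM eqZ //.
Qed.

Lemma goodR q : in_Zp p q -> good q (red q).
Proof. by []. Qed.

Lemma good_uniq a u v : good a u -> good a v -> u = v.
Proof. by move=> [_ <-] [_ <-]. Qed.

Lemma good_int (z : int) : good z%:~R z%:~R.
Proof.
have := @goodE z%:~R z 1; rewrite !divr1; apply; rewrite ?oner_eq0 ?divr1 //.
Qed.

Lemma good_nat n : good n%:R n%:R.
Proof. exact: (good_int n). Qed.

Lemma goodD a b u v : good a u -> good b v -> good (a + b) (u + v).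
Proof.
move=> [aZ <-] [bZ <-]; move: (aZ) (bZ); rewrite !in_ZpE => aF bF.
have -> : red a + red b = (numq a * denq b + numq b * denq a)%:~R / (denq a * denq b)%:~R.
  rewrite /red !intrD !intrM; field; by rewrite aF bF.
apply: goodE; first by rewrite intrM mulf_neq0.
rewrite -[a in LHS]divq_num_den -[b in LHS]divq_num_den.
rewrite !intrD !intrM; field; by rewrite !intr_eq0 !denq_neq0.
Qed.

Lemma goodM a b u v : good a u -> good b v -> good (a * b) (u * v).
Proof.
move=> [aZ <-] [bZ <-]; move: (aZ) (bZ); rewrite !in_ZpE => aF bF.
have -> : red a * red b = (numq a * numq b)%:~R / (denq a * denq b)%:~R.
  rewrite /red !intrM; field; by rewrite aF bF.
apply: goodE; first by rewrite intrM mulf_neq0.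
rewrite -[a in LHS]divq_num_den -[b in LHS]divq_num_den.
rewrite !intrM; field; by rewrite !intr_eq0 !denq_neq0.
Qed.

Lemma goodN a u : good a u -> good (- a) (- u).
Proof.
move=> h; have := goodM (good_int (-1)) h.
by rewrite !mulrN1z !mulN1r.
Qed.

Lemma goodB a b u v : good a u -> good b v -> good (a - b) (u - v).
Proof. by move=> ha hb; apply: goodD ha (goodN hb). Qed.

Lemma goodX a u n : good a u -> good (a ^+ n) (u ^+ n).
Proof.
move=> h; elim: n => [|n IH]; first by rewrite !expr0; exact: (good_nat 1).
by rewrite !exprS; apply: goodM.
Qed.

Lemma goodV a u : good a u -> u != 0 -> good a^-1 u^-1.
Proof.
move=> [aZ <-]; move: (aZ); rewrite in_ZpE => aF ru.
have nF : (numq a)%:~R != 0 :> F.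
  by apply: contraNneq ru; rewrite /red => ->; rewrite mul0r.
have -> : (red a)^-1 = (denq a)%:~R / (numq a)%:~R by rewrite /red invf_div.
apply: goodE => //.
by rewrite -[a in LHS]divq_num_den invf_div.
Qed.

Lemma good_sum I (r : seq I) (P : pred I) (A : I -> rat) (U : I -> F) :
  (forall i, P i -> good (A i) (U i)) ->
  good (\sum_(i <- r | P i) A i) (\sum_(i <- r | P i) U i).
Proof.
move=> h; apply: (big_ind2 good) => //; first exact: (good_nat 0).
by move=> *; apply: goodD.
Qed.

Lemma good_congr a b u v : good a u -> good b v -> congr_p p a b = (u == v).
Proof.
move=> ha hb; rewrite /congr_p; have hc := goodB ha hb.
rewrite -subr_eq0; set c := a - b in hc *; set w := u - v in hc *.
apply/idP/eqP.
  move=> cZ; have := goodM (goodR cZ) (good_nat p).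
  rewrite divfK ?pnatr_eq0 -?lt0n ?prime_gt0 // pchar_Fp_0 // mulr0.
  by move=> h0; apply: good_uniq hc h0.
move=> w0; case: hc => cZ rc.
move: (cZ); rewrite in_ZpE => dF.
have : (numq c)%:~R == 0 :> F.
  by move: rc; rewrite w0 /red => /eqP; rewrite mulf_eq0 invr_eq0 (negbTE dF) orbF.
rewrite Fp_int0 => pn.
have pz : ((p%:Z) %| numq c)%Z by rewrite dvdzE.
have := @goodE (c / p%:R) (numq c %/ p%:Z)%Z (denq c) dF.
case=> //.
rewrite -[c in LHS]divq_num_den -{1}(divzK pz) intrM.
rewrite mulrAC; congr (_ / _); rewrite mulfK //.
by rewrite pnatr_eq0 -lt0n prime_gt0.
Qed.

End Red.


Section Euler.
Variable p : nat.
Hypothesis pp : prime p.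
Hypothesis po : odd p.
Local Notation F := 'F_p.
Local Notation n := ((p.-1)./2).

Lemma Fp_nat0' m : ((m%:R : F) == 0) = (p %| m)%N.
Proof. by rewrite -val_eqE /= val_Fp_nat. Qed.

Lemma p_gt2 : (2 < p)%N.
Proof.
have := prime_gt1 pp; rewrite leq_eqVlt => /orP[/eqP p2|//].
by move: po; rewrite -p2.
Qed.

Lemma n2 : (2 * n = p.-1)%N.
Proof.
have := odd_double_half (p.-1).
have -> : odd p.-1 = false.
  by move: po; case: (p) => [//|q] /=; case: (odd q).
by rewrite add0n -mul2n.
Qed.

Lemma n_gt0 : (0 < n)%N.
Proof. have := n2; have := p_gt2; lia. Qed.

Lemma nat_neq0 m : (0 < m < p)%N -> (m%:R : F) != 0.
Proof.
move=> /andP[m0 mp]; rewrite Fp_nat0'; apply/negP => /(dvdn_leq m0); lia.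
Qed.

Lemma Fp_inj i j : (i < p)%N -> (j < p)%N -> (i%:R : F) = j%:R -> i = j.
Proof.
move=> ip jp /(congr1 val); rewrite /= !val_Fp_nat // !modn_small //.
Qed.

Lemma fact_neq0 m : (m < p)%N -> (m`!%:R : F) != 0.
Proof.
elim: m => [|m IH] mp; first by rewrite fact0 oner_eq0.
rewrite factS natrM mulf_neq0 ?IH ?nat_neq0 //; lia.
Qed.

Lemma ap1 (a : F) : a != 0 -> a ^+ p.-1 = 1.
Proof.
move=> a0; have : a ^+ (p.-1).+1 = a.
  by rewrite (prednK (prime_gt0 pp)); have := expf_card a; rewrite card_Fp.
rewrite exprS => h; apply: (mulfI a0); by rewrite mulr1 h.
Qed.

Lemma euler (a : F) : a != 0 ->
  a ^+ n = if [exists y : 'I_p, (y : nat)%:R ^+ 2 == a] then 1 else -1.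
Proof.
move=> a0; case: ifP.
  case/existsP => y /eqP ya.
  rewrite -ya -exprM n2 ap1 //; apply: contraNneq a0 => y0.
  by rewrite -ya y0 expr0n.
move=> nsq.
have sq1 : (a ^+ n - 1) * (a ^+ n + 1) = 0.
  by rewrite -subr_sqr expr1n -exprM (mulnC n 2) n2 ap1 // subrr.
move/eqP: sq1; rewrite mulf_eq0 => /orP[|]; last by rewrite addr_eq0 => /eqP.
rewrite subr_eq0 => /eqP an1; exfalso.
pose rs := a :: [seq ((i.+1)%:R : F) ^+ 2 | i <- iota 0 n].
have P0 : ('X^n - 1 : {poly F}) != 0.
  by rewrite -size_poly_eq0 size_Xn_sub_1 // n_gt0.
have := max_poly_roots P0.
rewrite size_Xn_sub_1 ?n_gt0 // => /(_ rs) H.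
suff : (size rs < n.+1)%N by rewrite /rs /= size_map size_iota ltnn.
apply: H => /=.
- apply/andP; split.
    by rewrite /root !hornerE an1 subrr.
  apply/allP => z /mapP[i]; rewrite mem_iota add0n => /andP[_ ilt] ->.
  rewrite /root !hornerE -exprM n2 ap1 ?subrr //.
  apply: nat_neq0; have := n2; lia.
- apply/andP; split.
    apply/mapP => -[i]; rewrite mem_iota add0n => /andP[_ ilt] ai.
    move/negbT/negP: nsq; apply; apply/existsP.
    have ip : (i.+1 < p)%N by have := n2; lia.
    by exists (Ordinal ip); rewrite /= ai.
  rewrite map_inj_in_uniq ?iota_uniq //.
  move=> i j; rewrite !mem_iota !add0n => /andP[_ ilt] /andP[_ jlt] /eqP.
  rewrite -subr_eq0 subr_sqr mulf_eq0 => /orP[|].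
    rewrite subr_eq0 => /eqP /Fp_inj; have := n2.
    by move=> h1 h2; have := h2 ltac:(lia) ltac:(lia); lia.
  rewrite -natrD (negbTE (nat_neq0 _)) //; have := n2; lia.
Qed.

End Euler.


Lemma binQ a b : (b <= a)%N ->
  ('C(a, b)%:R : rat) = a`!%:R / (b`!%:R * (a - b)`!%:R).
Proof.
move=> ba; rewrite -(bin_fact ba) !natrM mulfK //.
by rewrite mulf_neq0 // pnatr_eq0 -lt0n fact_gt0.
Qed.

Lemma multi n j k : (2 * k <= n)%N -> (j <= n)%N ->
  ('C(n, 2 * k) * 'C(2 * k, k) * (if (k <= j)%N then 'C(n - 2 * k, j - k) else 0)
   = 'C(n, j) * ('C(j, k) * 'C(n - j, k)))%N.
Proof.
move=> kn jn; case: (leqP k j) => kj; last by rewrite (@bin_small j) // !muln0.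
case: (leqP (j + k) n) => jkn; last first.
  have h1 : 'C(n - j, k) = 0%N by rewrite bin_small //; lia.
  have h2 : 'C(n - 2 * k, j - k) = 0%N by rewrite bin_small //; lia.
  by rewrite h1 h2 !muln0.
apply/eqP; rewrite -(eqr_nat rat) !natrM !binQ //; try lia.
have e1 : (2 * k - k = k)%N by lia.
have e2 : (n - 2 * k - (j - k) = n - j - k)%N by lia.
rewrite e1 e2.
apply/eqP; field.
by rewrite !pnatr_eq0 -!lt0n !fact_gt0.
Qed.

Lemma vsum n j : (j <= n)%N ->
  (\sum_(k < n./2.+1) 'C(j, k) * 'C(n - j, k) = 'C(n, j))%N.
Proof.
move=> jn.
have ext : forall a, (forall i, (a <= i)%N -> 'C(j, i) * 'C(n - j, i) = 0)%N -> (a <= n.+1)%N ->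
   (\sum_(k < a) 'C(j, k) * 'C(n - j, k) = \sum_(k < n.+1) 'C(j, k) * 'C(n - j, k))%N.
  move=> a h an; rewrite (big_ord_widen _ (fun k => 'C(j, k) * 'C(n - j, k))%N an).
  rewrite big_mkcond; apply: eq_bigr => i _; case: ifP => // /negbT; rewrite -leqNgt.
  by move/h.
rewrite ext; first last.
- lia.
- move=> i ni; case: (leqP i j) => ij; last by rewrite bin_small.
  by rewrite (@bin_small (n - j)) ?muln0 //; lia.
rewrite -(ext (n - j).+1); first last.
- lia.
- by move=> i ni; rewrite (@bin_small (n - j)) ?muln0.
rewrite -bin_sub //; have := binomial.Vandermonde j (n - j)%N (n - j)%N; rewrite subnKC // => <-.
apply: eq_bigr => i _; rewrite bin_sub //; have := ltn_ord i; lia.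
Qed.

Lemma shiftsum (R : comPzRingType) (z : R) k m N : (k + m <= N)%N ->
  z ^+ k * (1 + z) ^+ m = \sum_(j < N.+1) ((if (k <= j)%N then 'C(m, j - k) else 0)%:R * z ^+ j).
Proof.
move=> kmN.
rewrite addrC exprD1n big_distrr /=.
rewrite -(big_mkord xpredT (fun j => ((if (k <= j)%N then 'C(m, j - k) else 0)%:R * z ^+ j))).
rewrite (big_cat_nat _ (n := k)) //=; last lia.
rewrite [X in _ = X + _]big1_seq ?add0r; last first.
  by move=> i; rewrite mem_index_iota => /andP[_ /andP[_ ik]]; rewrite leqNgt ik mul0r.
rewrite -[in RHS](add0n k) big_addn add0n.
rewrite (big_cat_nat _ (n := m.+1)) //=; last lia.
rewrite [X in _ = _ + X]big1_seq ?addr0; last first.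
  move=> i; rewrite mem_index_iota => /andP[_ /andP[mi _]].
  by rewrite leq_addl addnK bin_small // mul0r.
rewrite big_mkord; apply: eq_bigr => i _.
by rewrite leq_addl addnK exprD mulr_natl mulrnAr mulrC.
Qed.

Lemma half2 k n : (k <= n./2)%N -> (2 * k <= n)%N.
Proof. have := odd_double_half n; rewrite -addnn; lia. Qed.

Lemma Vid (R : comPzRingType) (z : R) n :
  \sum_(j < n.+1) ('C(n, j) ^ 2)%:R * z ^+ j =
  \sum_(k < n./2.+1) ('C(n, 2 * k) * 'C(2 * k, k))%:R * (z ^+ k * (1 + z) ^+ (n - 2 * k)).
Proof.
transitivity (\sum_(k < n./2.+1) \sum_(j < n.+1)
   (('C(n, 2 * k) * 'C(2 * k, k)) * (if (k <= j)%N then 'C(n - 2 * k, j - k) else 0))%:R * z ^+ j); last first.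
  apply: eq_bigr => k _; have k2 := half2 (ltn_ord k : (k < n./2.+1)%N).
  rewrite (@shiftsum _ z k (n - 2 * k) n); last lia.
  by rewrite big_distrr; apply: eq_bigr => j _; rewrite /= natrM mulrA.
rewrite exchange_big /=; apply: eq_bigr => j _.
rewrite -mulr_suml -natr_sum; congr (_%:R * _).
have jn : (j <= n)%N by have := ltn_ord j; lia.
rewrite (eq_bigr (fun k : 'I_(n./2.+1) => 'C(n, j) * ('C(j, k) * 'C(n - j, k))))%N; last first.
  by move=> k _; rewrite multi //; apply: half2; have := ltn_ord k; lia.
by rewrite -big_distrr /= vsum.
Qed.
Lemma term_alg (R : fieldType) (sj sk Yj Yk Tj Tk Sj K M J N : R) :
 sj * sj = 1 -> sk * sk = 1 -> Yj != 0 -> Yk != 0 -> Tj != 0 -> Tk != 0 -> K != 0 -> M != 0 -> J != 0 ->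
 sj * (sk * (sk * 1)) * (Yj * (Yk * (Yk * 1))) * ((Tj * (Tk * (Tk * 1)))^-1 *
   (sk * (sj * sk * (Tj * Tk * (Tj * Tk)) * M * N / K) / (K * M * J) * (Sj / Yj / Tj)))
 = N / (K * K * J) * (Yk ^+ 2 * Sj).
Proof.
move=> sj2 sk2 yj yk tj tk k0 m0 j0.
transitivity ((sj * sj) * ((sk * sk) * (sk * sk)) * (N / (K * K * J) * (Yk ^+ 2 * Sj))).
  by field; rewrite ?yj ?yk ?tj ?tk ?k0 ?m0 ?j0.
by rewrite sj2 sk2 !mul1r.
Qed.


Section Main.
Variable p : nat.
Hypothesis pp : prime p.
Hypothesis po : odd p.
Local Notation F := 'F_p.
Local Notation n := ((p.-1)./2).

Lemma pE : (p = (2 * n).+1)%N.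
Proof. have := n2 po; have := prime_gt0 pp; lia. Qed.

Lemma key_nat (m k : nat) :
  ((2 * m).+2 * (2 * m).+1 + 4 * k.+1 * m.+1 = 2 * m.+1 * (2 * (k + m.+1)).+1)%N.
Proof. nia. Qed.

Lemma Lfact m : (m <= n)%N ->
  ((2 * m)`!%:R * (n - m)`!%:R : F) = (- 4%:R) ^+ m * m`!%:R * n`!%:R.
Proof.
elim: m => [|m IH] mn; first by rewrite muln0 fact0 subn0 expr0 !mul1r.
have IH' := IH (ltnW mn).
have e1 : ((2 * m.+1)`! = (2 * m).+2 * ((2 * m).+1 * (2 * m)`!))%N.
  by rewrite mulnS add2n !factS.
have e2 : ((n - m)`! = (n - m.+1).+1 * (n - m.+1)`!)%N.
  by rewrite -factS subnSK.
rewrite e2 natrM in IH'.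
have c0 : ((n - m.+1).+1%:R : F) != 0.
  apply: nat_neq0 => //; have := n2 po; have := prime_gt0 pp; lia.
apply: (mulfI c0).
have kF : ((2 * m).+2%:R * (2 * m).+1%:R : F) = - (4%:R * (n - m.+1).+1%:R * m.+1%:R).
  apply/eqP; rewrite -subr_eq0 opprK -!natrM -natrD key_nat.
  have -> : (n - m.+1 + m.+1 = n)%N by lia.
  by rewrite -pE natrM pchar_Fp_0 // mulr0.
rewrite e1 (factS m) !natrM.
transitivity ((2 * m).+2%:R * (2 * m).+1%:R * ((2 * m)`!%:R * ((n - m.+1).+1%:R * (n - m.+1)`!%:R)) : F).
  ring.
rewrite IH' kF exprS; ring.
Qed.

Lemma L1 k : (k <= n)%N -> ('C(2 * k, k)%:R : F) = (- 4%:R) ^+ k * 'C(n, k)%:R.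
Proof.
move=> kn.
have f0 : ((k`! * k`! * (n - k)`!)%:R : F) != 0.
  rewrite !natrM !mulf_neq0 // fact_neq0 //; have := n2 po; have := prime_gt0 pp; lia.
apply: (mulIf f0).
have b1 := bin_fact (leq_addl k k); rewrite addnK in b1.
have b2 := bin_fact kn.
rewrite addnn -mul2n in b1.
transitivity (((2 * k)`!%:R * (n - k)`!%:R) : F).
  by rewrite -b1 !natrM; ring.
rewrite Lfact // -b2 !natrM; ring.
Qed.


Lemma term (y : F) k : y != 0 -> (2 * k <= n)%N ->
  (- y) ^+ n * ((2%:R ^+ n)^-1 * ((-1) ^+ k * (2 * n - 2 * k)`!%:R /
      (k`!%:R * (n - k)`!%:R * (n - 2 * k)`!%:R) * ((y + y^-1) / 2%:R) ^+ (n - 2 * k)))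
  = ('C(n, 2 * k) * 'C(2 * k, k))%:R * ((y ^+ 2) ^+ k * (1 + y ^+ 2) ^+ (n - 2 * k)).
Proof.
move=> y0 kn.
have hp := n2 po; have hp0 := prime_gt0 pp.
set j := (n - 2 * k)%N.
have two0 : (2%:R : F) != 0 by apply: nat_neq0; have := p_gt2 pp po; lia.
have em : (n - k = j + k)%N by rewrite /j; lia.
have e2n : (2 * n - 2 * k = 2 * (j + k))%N by rewrite /j; lia.
have LF := Lfact (m := (j + k)%N) ltac:(lia).
have ek : (n - (j + k) = k)%N by rewrite /j; lia.
rewrite ek in LF.
have b1 := bin_fact (leq_addl k k); rewrite addnK addnn -mul2n in b1.
have b2 := bin_fact kn; rewrite -/j in b2.
have hnj : n = (j + 2 * k)%N by rewrite /j; lia.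
have fk : (k`!%:R : F) != 0 by apply: fact_neq0; lia.
have fj : (j`!%:R : F) != 0 by apply: fact_neq0; rewrite /j; lia.
have fm : ((j + k)`!%:R : F) != 0 by apply: fact_neq0; rewrite /j; lia.
have CE : (('C(n, 2 * k) * 'C(2 * k, k))%:R : F) = n`!%:R / (k`!%:R * k`!%:R * j`!%:R).
  apply/(mulIf (x := (k`!%:R * k`!%:R * j`!%:R))); first by rewrite !mulf_neq0.
  rewrite divfK ?mulf_neq0 // -b2 -b1 !natrM; ring.
have AE : ((2 * (j + k))`!%:R : F) = (- 4%:R) ^+ (j + k) * (j + k)`!%:R * n`!%:R / k`!%:R.
  by rewrite -LF mulfK.
have yE : y + y^-1 = (1 + y ^+ 2) / y by field.
rewrite CE e2n AE em -/j yE.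
rewrite -[in LHS](mulN1r y) exprMn.
set N := (n`!)%:R; rewrite hnj.
have s2 : forall t, ((-1 : F) ^+ (2 * t)) = 1 by move=> t; rewrite exprM sqrrN expr1n expr1n.
have e4 : forall t, (4%:R : F) ^+ t = 2%:R ^+ t * 2%:R ^+ t by move=> t; rewrite -exprMn -natrM.
rewrite -[(- 4%:R)]mulN1r exprMn e4 !exprD !expr0 !expr_div_n (exprAC y 2 k).
have yj : y ^+ j != 0 by exact: (expf_neq0 _ y0).
have tj : (2%:R : F) ^+ j != 0 by exact: (expf_neq0 _ two0).
have tk : (2%:R : F) ^+ k != 0 by exact: (expf_neq0 _ two0).
have yk : y ^+ k != 0 by exact: (expf_neq0 _ y0).
rewrite -(signr_odd _ j) -(signr_odd _ k).
move: (y ^+ j) yj (y ^+ k) yk (2%:R ^+ j) tj (2%:R ^+ k) tk ((1 + y ^+ 2) ^+ j).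
move=> Yj yj Yk yk Tj tj Tk tk Sj.
move: (k`!%:R) fk ((j + k)`!%:R) fm (j`!%:R) fj N => K fk M fm J fj N.
have sg : forall b : bool, ((-1 : F) ^+ b) * ((-1) ^+ b) = 1.
  by move=> b; rewrite -expr2 sqrr_sign.
exact: term_alg.
Qed.


Lemma mainF (y : F) : y != 0 ->
  \sum_(k < n.+1) ('C(2 * k, k)%:R) ^+ 2 * (y / 4%:R) ^+ (2 * k)
  = (- y) ^+ n * ((2%:R ^+ n)^-1 * \sum_(k < n./2.+1) ((-1) ^+ k * (2 * n - 2 * k)`!%:R /
      (k`!%:R * (n - k)`!%:R * (n - 2 * k)`!%:R) * ((y + y^-1) / 2%:R) ^+ (n - 2 * k))).
Proof.
move=> y0.
rewrite !big_distrr /=.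
rewrite (eq_bigr (fun k : 'I_(n./2.+1) => ('C(n, 2 * k) * 'C(2 * k, k))%:R * ((y ^+ 2) ^+ k * (1 + y ^+ 2) ^+ (n - 2 * k)))); last first.
  by move=> k _; rewrite term //; apply: half2; have := ltn_ord k; lia.
rewrite -Vid; apply: eq_bigr => j _.
have jn : (j <= n)%N by have := ltn_ord j; lia.
have f0 : (4%:R : F) != 0.
  have two0 : (2%:R : F) != 0 by apply: nat_neq0; have := p_gt2 pp po; lia.
  by rewrite -[4%N]/(2 * 2)%N natrM mulf_neq0.
rewrite L1 // natrX expr_div_n !exprM exprMn -!exprM mulnC !exprM sqrrN.
move: ('C(n, j)%:R : F) ((4%:R : F) ^+ 2) (expf_neq0 2 f0) => C Q Q0.
rewrite -exprM mulnC exprM; field; by rewrite expf_neq0.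
Qed.

End Main.


Unset Implicit Arguments.

Theorem theorem2p8 (p : nat) (x : rat) :
  prime p -> odd p -> in_Zp p x -> ~~ congr_p p x 0 ->
  congr_p p
    (\sum_(k < (p.-1)./2.+1) ('C(2 * k, k)%:R) ^+ 2 * (x / 4%:R) ^+ (2 * k))
    ((legendre_rat p (- x))%:~R * (legendreP ((p.-1)./2)).[(x + x^-1) / 2%:R]).
Proof.
move=> pp po xZ nx.
set n := (p.-1)./2.
have hx : good x (red p x) by [].
set y := red p x in hx.
have good0 : good 0 (0 : 'F_p) by have := good_nat pp 0.
have good1 : good 1 (1 : 'F_p) by have := good_nat pp 1; rewrite !mulr1n.
have y0 : y != 0 by rewrite -(good_congr pp hx good0).
have two0 : (2%:R : 'F_p) != 0 by apply: (nat_neq0 pp po); have := p_gt2 pp po; lia.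
have f0 : (4%:R : 'F_p) != 0 by rewrite -[4%N]/(2 * 2)%N natrM mulf_neq0.
have Lv : legendre_rat p (- x) =
    if [exists y' : 'I_p, ((y' : nat)%:R : 'F_p) ^+ 2 == - y] then 1 else -1.
  rewrite /legendre_rat (good_congr pp (goodN pp hx) good0) oppr_eq0 (negbTE y0).
  congr (if _ then _ else _); apply: eq_existsb => y'.
  by rewrite (good_congr pp (goodX pp 2 (good_nat pp y')) (goodN pp hx)).
have LF : ((legendre_rat p (- x))%:~R : 'F_p) = (- y) ^+ n.
  by rewrite Lv (euler pp po) // ?oppr_eq0 //; case: ifP.
rewrite /legendreP hornerZ horner_sum.
rewrite (good_congr pp (u := \sum_(k < n.+1) ('C(2 * k, k)%:R) ^+ 2 * (y / 4%:R) ^+ (2 * k))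
   (v := (legendre_rat p (- x))%:~R * ((2%:R ^+ n)^-1 * \sum_(k < n./2.+1) ((-1) ^+ k * (2 * n - 2 * k)`!%:R /
      (k`!%:R * (n - k)`!%:R * (n - 2 * k)`!%:R) * ((y + y^-1) / 2%:R) ^+ (n - 2 * k))))).
- by rewrite LF (mainF pp po).
- apply: (good_sum pp) => k _; apply: (goodM pp); first by apply: (goodX pp); apply: (good_nat pp).
  apply: (goodX pp); apply: (goodM pp) => //; apply: (goodV pp) => //; exact: (good_nat pp).
apply: (goodM pp); first exact: (good_int pp).
apply: (goodM pp); first by apply: (goodV pp); [apply: (goodX pp); apply: (good_nat pp) | apply: expf_neq0].
apply: (good_sum pp) => k _; rewrite hornerZ hornerXn.
apply: (goodM pp); last first.
  apply: (goodX pp); apply: (goodM pp); last by apply: (goodV pp) => //; apply: (good_nat pp).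
  by apply: (goodD pp) => //; apply: (goodV pp).
apply: (goodM pp); first apply: (goodM pp).
- by apply: (goodX pp); apply: (goodN pp).
- exact: (good_nat pp).
apply: (goodV pp); first by rewrite -!natrM; apply: (good_nat pp).
have k2 : (2 * k <= n)%N by apply: half2; have := ltn_ord k; lia.
have := n2 po; have := prime_gt0 pp => h1 h2.
by rewrite !mulf_neq0 //; apply: (fact_neq0 pp po); lia.
Qed.
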